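(* Let $A\in\mathbb{C}^{n\times n}$, let $1\le j\le n$, and fix vectors $\mathbf v,\mathbf c_1,\dots,\mathbf c_j\in\mathbb{C}^n$. Consider the map $\mathbf f$ of the variables $\mathbf q_1,\dots,\mathbf q_j\in\mathbb{C}^n$ and $\hat H=(h_{il})\in\mathbb{C}^{j\times j}$ (with columns $\hat{\mathbf h}_1,\dots,\hat{\mathbf h}_j$) whose components are the left-hand sides of the system $$\begin{cases} A[\mathbf q_1,\dots,\mathbf q_j]-[\mathbf q_1,\dots,\mathbf q_j][\hat{\mathbf h}_1,\dots,\hat{\mathbf h}_j]=O,\\ [\mathbf c_1,\dots,\mathbf c_i]^{\mathsf H}\mathbf q_i-(0,\dots,0,1)^\top=\mathbf 0\in\mathbb{C}^i, & i=1,\dots,j,\\ \mathbf q_1-\mathbf v=\mathbf 0,\\ h_{il}=0, & i>l+1.\end{cases}$$ Assume $(\mathbf q_1,\dots,\mathbf q_j,\hat H)$ satisfies this system and $h_{i+1,i}\neq0$ for $i=1,\dots,j-1$. Then the Jacobian of $\mathbf f$ at $(\mathbf q_1,\dots,\mathbf q_j,\hat H)$ is injective.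
   Context: The Jacobian is the complex derivative of $\mathbf f$ with respect to all entries of $\mathbf q_1,\dots,\mathbf q_j$ and all entries of $\hat H$ ($\mathbf f$ is holomorphic in these variables); injective means it has trivial kernel. $X^{\mathsf H}$ denotes conjugate transpose. *)

(* Defs.v *)
From mathcomp Require Import all_boot all_order all_algebra.
From mathcomp Require Import all_classical all_reals all_analysis.
From mathcomp Require Export complex.
Set Implicit Arguments. Unset Strict Implicit. Unset Printing Implicit Defensive.
Import Order.TTheory GRing.Theory Num.Theory.
Import numFieldNormedType.Exports.
Local Open Scope ring_scope.

(* Complex numbers: R[i] for R : realType (realType = the reals). Indices are 0-based:
   column l of Q is q_(l+1), column l of C is c_(l+1), H = \hat H. *)

(* The complex field C, as a numClosedFieldType (so that MathComp-Analysis'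
   normed-space structures on numFieldTypes and their matrices apply). *)
Definition Cx (R : realType) : numClosedFieldType := R[i].

Definition ctrmx (R : realType) m p (X : 'M[Cx R]_(m, p)) : 'M[Cx R]_(p, m) :=
  (map_mx Num.conj X)^T.

(* Its value is a 4-tuple of blocks:
   1. A Q - Q H                                            (n x j)
   2. the j blocks [c_1..c_i]^H q_i - e_i  (i = 1..j), stored in a j x j matrix:
      entry (k,l) with k <= l is the k-th component of the l-th block;
      entries with k > l are padded with the constant 0     (j x j)
   3. q_1 - v                                               (n x 1)
   4. the entries h_(k,l) with k > l+1 (1-based: i > l+1); other entries padded
      with the constant 0                                    (j x j)
   The constant zero paddings do not affect the Jacobian's kernel. *)
Definition arnoldi_f (R : realType) (n j : nat) (A : 'M[Cx R]_n) (v : 'cV[Cx R]_n)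
  (C : 'M[Cx R]_(n, j)) (x : 'M[Cx R]_(n, j) * 'M[Cx R]_j) :
  'M[Cx R]_(n, j) * 'M[Cx R]_j * 'cV[Cx R]_n * 'M[Cx R]_j :=
  let Q := x.1 in let H := x.2 in
  (A *m Q - Q *m H,
   \matrix_(k < j, l < j)
      (if (k <= l)%N then (ctrmx C *m Q) k l - (k == l)%:R else 0),
   \col_(r < n) (\sum_(l < j | (l == 0 :> nat)) Q r l) - v,
   \matrix_(k < j, l < j) (if (l.+1 < k)%N then H k l else 0)).

(* Main.v *)
From HB Require Import structures.
Require Import Defs.
From mathcomp Require Import all_boot all_order all_algebra.
From mathcomp Require Import all_classical all_reals all_analysis.
From mathcomp Require Import complex.
Import Order.TTheory GRing.Theory Num.Theory.
Import numFieldNormedType.Exports.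
Local Open Scope ring_scope.

Lemma mx_entry_le (K : numFieldType) m n (M : 'M[K]_(m,n)) i k : `|M i k| <= `|M|.
Proof.
rewrite [X in _ <= X]/Num.Def.normr /= mx_normE.
have -> : `|M i k| = (widen_itv `|M i k|%:itv : {nonneg K})%:num by [].
rewrite num_le; apply/bigmax_geP; right; by exists (i,k).
Qed.

Lemma mx_norm_le (K : numFieldType) m p (M : 'M[K]_(m,p)) c :
  0 <= c -> (forall i k, `|M i k| <= c) -> `|M| <= c.
Proof.
move=> c0 Hc; change (mx_norm M <= c).
have [->|nz] := eqVneq (mx_norm M) 0; first by [].
by have [[i k] ->] := mx_norm_neq0 nz; apply: Hc.
Qed.

Lemma mulmx_norm (K : numFieldType) m p q (X : 'M[K]_(m,p)) (Y : 'M[K]_(p,q)) :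
  `|X *m Y| <= p%:R * `|X| * `|Y|.
Proof.
apply: mx_norm_le; first by rewrite !mulr_ge0.
move=> i k; rewrite mxE; apply: le_trans (ler_norm_sum _ _ _) _.
have H : forall l : 'I_p, `|X i l * Y l k| <= `|X| * `|Y|.
  by move=> l; rewrite normrM ler_pM // mx_entry_le.
apply: le_trans (ler_sum _ (fun l _ => H l)) _.
by rewrite sumr_const card_ord -mulrA mulr_natl.
Qed.

Arguments mx_entry_le {K m n}.
Arguments mx_norm_le {K m p}.
Arguments mulmx_norm {K m p q}.

Lemma prod_norm_le (K : numDomainType) (U V : normedZmodType K) (x : U * V) c :
  `|x.1| <= c -> `|x.2| <= c -> `|x| <= c.
Proof.
by move=> h1 h2; rewrite prod_normE comparable_ge_max ?real_comparable ?normr_real ?h1.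
Qed.

Lemma prod_norm_ge1 (K : numDomainType) (U V : normedZmodType K) (x : U * V) :
  `|x.1| <= `|x|.
Proof. by rewrite prod_normE comparable_le_max ?real_comparable ?normr_real ?lexx. Qed.

Lemma prod_norm_ge2 (K : numDomainType) (U V : normedZmodType K) (x : U * V) :
  `|x.2| <= `|x|.
Proof. by rewrite prod_normE comparable_le_max ?real_comparable ?normr_real ?lexx ?orbT. Qed.
Arguments prod_norm_le {K U V}.
Arguments prod_norm_ge1 {K U V}.
Arguments prod_norm_ge2 {K U V}.

Section S.
Variables (R : realType) (n j : nat) (A : 'M[Cx R]_n) (v : 'cV[Cx R]_n) (C : 'M[Cx R]_(n, j)) (Q : 'M[Cx R]_(n, j)) (H : 'M[Cx R]_j).

Definition Dfun (h : 'M[Cx R]_(n,j) * 'M[Cx R]_j) : 'M[Cx R]_(n,j) * 'M[Cx R]_j * 'cV[Cx R]_n * 'M[Cx R]_j :=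
 (A *m h.1 - (h.1 *m H + Q *m h.2),
  \matrix_(k < j, l < j) (if (k <= l)%N then (ctrmx C *m h.1) k l else 0),
  \col_(r < n) (\sum_(l < j | (l == 0 :> nat)) h.1 r l),
  \matrix_(k < j, l < j) (if (l.+1 < k)%N then h.2 k l else 0)).

Lemma zmod_rearr (V : zmodType) (a b c d e f : V) :
  a + b - (c + d + (e + f)) = a - c + (b - (e + d)) + - f.
Proof. by rewrite !opprD !addrA (addrAC a) -(addrA _ (- d)) (addrC (- d)) addrA. Qed.

Lemma pairD (U V : zmodType) (a c : U) (b d : V) : (a,b) + (c,d) = (a+c,b+d).
Proof. by []. Qed.

Lemma f_expand (h : 'M[Cx R]_(n,j) * 'M[Cx R]_j) :
  arnoldi_f A v C ((Q,H) + h) = arnoldi_f A v C (Q,H) + Dfun h + (- (h.1 *m h.2), 0, 0, 0).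
Proof.
case: h => h1 h2 /=.
rewrite /arnoldi_f /Dfun /=.
rewrite !pairD; congr (_, _, _, _) => /=.
- by rewrite mulmxDr mulmxDl !mulmxDr zmod_rearr.
- apply/matrixP => k l; rewrite mulmxDr !mxE; case: ifP => _; rewrite ?addr0 //.
  by rewrite addrAC.
- apply/matrixP => k l; rewrite !mxE (eq_bigr (fun l => Q k l + h1 k l)); last by move=> *; rewrite mxE.
  by rewrite big_split /= addr0 addrAC.
- apply/matrixP => k l; rewrite !mxE; case: ifP => _; by rewrite ?addr0.
Qed.

Lemma pairZ (K : pzRingType) (U V : lmodType K) (a : K) (x : U) (y : V) :
  a *: (x, y) = (a *: x, a *: y).
Proof. by []. Qed.

Lemma zmod_rearr2 (U : zmodType) (p y r z s w : U) :
  p + y - (r + z + (s + w)) = p - (r + s) + (y - (z + w)).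
Proof. by rewrite [r + z + _]addrACA opprD addrACA. Qed.

Lemma Dlin : linear Dfun.
Proof.
move=> a [x1 x2] [y1 y2]; rewrite /Dfun /= !pairZ !pairD; congr (_, _, _, _) => /=.
- rewrite !mulmxDr !mulmxDl -!scalemxAr -!scalemxAl zmod_rearr2.
  by rewrite scalerBr scalerDr.
- apply/matrixP => k l; rewrite mulmxDr -scalemxAr !mxE; case: ifP => _; by rewrite ?mulr0 ?addr0.
- apply/matrixP => k l; rewrite !mxE (eq_bigr (fun l => a * x1 k l + y1 k l)); last by move=> *; rewrite !mxE.
  by rewrite big_split /= mulr_sumr.
- apply/matrixP => k l; rewrite !mxE; case: ifP => _; by rewrite ?mulr0 ?addr0.
Qed.

Definition DL : {linear _ -> _} := HB.pack Dfun (GRing.isLinear.Build _ _ _ _ Dfun Dlin).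


Local Notation V := ('M[Cx R]_(n,j) * 'M[Cx R]_j)%type.

Lemma Dbound (x : V) :
  `|Dfun x| <= (n%:R * `|A| + j%:R * `|H| + j%:R * `|Q| + n%:R * `|ctrmx C| + j%:R + 1) * `|x|.
Proof.
case: x => x1 x2.
set x := (x1, x2).
have hx1 : `|x1| <= `|x| := prod_norm_ge1 x.
have hx2 : `|x2| <= `|x| := prod_norm_ge2 x.
have nx0 : 0 <= `|x| by [].
set b1 := n%:R * `|A| + j%:R * `|H| + j%:R * `|Q|.
set b2 := n%:R * `|ctrmx C|.
have c1 : `|A *m x1 - (x1 *m H + Q *m x2)| <= b1 * `|x|.
  have e1 : `|A *m x1| <= n%:R * `|A| * `|x|.
    by apply: le_trans (mulmx_norm _ _) _; rewrite ler_wpM2l // mulr_ge0.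
  have e2 : `|x1 *m H| <= j%:R * `|H| * `|x|.
    by apply: le_trans (mulmx_norm _ _) _; rewrite mulrAC ler_wpM2l // mulr_ge0.
  have e3 : `|Q *m x2| <= j%:R * `|Q| * `|x|.
    by apply: le_trans (mulmx_norm _ _) _; rewrite ler_wpM2l // mulr_ge0.
  apply: le_trans (ler_normB _ _) _.
  apply: le_trans (lerD (lexx _) (ler_normD _ _)) _.
  by rewrite /b1 !mulrDl -addrA lerD // lerD.
have c2 : `|(\matrix_(k < j, l < j) (if (k <= l)%N then (ctrmx C *m x1) k l else 0) : 'M[Cx R]_j)| <= b2 * `|x|.
  apply: mx_norm_le; first by rewrite !mulr_ge0.
  move=> k l; rewrite mxE; case: ifP => _; last by rewrite normr0 !mulr_ge0.
  apply: le_trans (mx_entry_le _ _ _) _.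
  by apply: le_trans (mulmx_norm _ _) _; rewrite ler_wpM2l // mulr_ge0.
have c3 : `|(\col_(r < n) (\sum_(l < j | (l == 0 :> nat)) x1 r l) : 'cV[Cx R]_n)| <= j%:R * `|x|.
  apply: mx_norm_le; first by rewrite !mulr_ge0.
  move=> r l; rewrite mxE; apply: le_trans (ler_norm_sum _ _ _) _.
  rewrite big_mkcond /=.
  have Hb : forall l0 : 'I_j, (if l0 == 0 :> nat then `|x1 r l0| else 0) <= `|x|.
    by move=> l0; case: ifP => _ //; apply: le_trans (mx_entry_le _ _ _) hx1.
  apply: le_trans (ler_sum _ (fun l0 _ => Hb l0)) _.
  by rewrite sumr_const card_ord mulr_natl.
have c4 : `|(\matrix_(k < j, l < j) (if (l.+1 < k)%N then x2 k l else 0) : 'M[Cx R]_j)| <= 1 * `|x|.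
  apply: mx_norm_le; first by rewrite mul1r.
  move=> k l; rewrite mxE mul1r; case: ifP => _; last by rewrite normr0.
  exact: le_trans (mx_entry_le _ _ _) hx2.
have Pb : forall (b c : Cx R) (y : Cx R), 0 <= b -> 0 <= c -> y <= b * `|x| -> y <= (b + c) * `|x|.
  by move=> b c y b0 c0 /le_trans; apply; rewrite ler_wpM2r // lerDl.
have Pc : forall (b c : Cx R) (y : Cx R), 0 <= b -> 0 <= c -> y <= c * `|x| -> y <= (b + c) * `|x|.
  by move=> b c y b0 c0 /le_trans; apply; rewrite ler_wpM2r // lerDr.
have g1 : 0 <= b1 by rewrite /b1 !addr_ge0 // mulr_ge0.
have g2 : 0 <= b2 by rewrite /b2 mulr_ge0.
rewrite /Dfun /=.
have g3 : 0 <= (j%:R : Cx R) by [].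
apply: prod_norm_le => /=; last by apply: (Pc) => //; rewrite !addr_ge0.
apply: prod_norm_le => /=; last by apply: (Pb); rewrite ?addr_ge0 //; apply: (Pc); rewrite ?addr_ge0.
apply: prod_norm_le => /=; last by apply: (Pb); rewrite ?addr_ge0 //; apply: (Pb); rewrite ?addr_ge0 //; apply: (Pc).
by apply: (Pb); rewrite ?addr_ge0 //; apply: (Pb); rewrite ?addr_ge0 //; apply: (Pb).
Qed.


Lemma DL_cont : continuous (DL : V -> _).
Proof.
apply: bounded_linear_continuous; apply/linear_boundedP.
near=> r.
have hr : n%:R * `|A| + j%:R * `|H| + j%:R * `|Q| + n%:R * `|ctrmx C| + j%:R + 1 <= r.
  near: r; apply: nbhs_pinfty_ge; apply: ger0_real.
  by rewrite !addr_ge0 // mulr_ge0.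
by move=> x; apply: le_trans (Dbound x) _; rewrite ler_wpM2r.
Unshelve. all: by end_near. Qed.

Lemma f_littleo : arnoldi_f A v C \o shift ((Q,H) : V) =
  cst (arnoldi_f A v C (Q,H)) + (DL : V -> _) +o_ (0 : V) id.
Proof.
apply/eqaddoP => _ /posnumP[e].
near=> h.
have hh : `|h| <= (j.+1)%:R^-1 * e%:num.
  by near: h; apply: (@nbhs0_le _ V); rewrite mulr_gt0 // invr_gt0 ltr0Sn.
move: hh; rewrite ler_pdivlMl ?ltr0Sn // => hh.
have -> : (arnoldi_f A v C \o shift ((Q, H) : V) - (cst (arnoldi_f A v C (Q, H)) + DL)) h
   = (- (h.1 *m h.2), 0, 0, 0).
  change (arnoldi_f A v C (h + (Q, H)) - (arnoldi_f A v C (Q, H) + Dfun h) = (- (h.1 *m h.2), 0, 0, 0)).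
  by rewrite [h + _]addrC f_expand addrC addKr.
have e0 : 0 <= e%:num * `|h| by rewrite mulr_ge0.
apply: prod_norm_le; last by rewrite normr0.
apply: prod_norm_le; last by rewrite normr0.
apply: prod_norm_le; last by rewrite normr0.
rewrite /= normrN; apply: le_trans (mulmx_norm _ _) _.
have hj : j%:R * `|h| <= e%:num.
  by apply: le_trans hh; rewrite ler_wpM2r // ler_nat.
apply: le_trans (_ : j%:R * `|h| * `|h| <= _); last by rewrite ler_wpM2r.
rewrite -mulrA -[X in _ <= X]mulrA ler_wpM2l //.
by rewrite ler_pM // ?prod_norm_ge1 ?prod_norm_ge2.
Unshelve. all: by end_near. Qed.


Lemma diffE_f : 'd (arnoldi_f A v C) ((Q,H) : V) = DL :> (V -> _).
Proof. exact: diff_unique DL_cont f_littleo. Qed.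

Lemma diff_f : differentiable (arnoldi_f A v C) ((Q,H) : V).
Proof. by apply/diff_locallyP; rewrite diffE_f; split; [exact: DL_cont | exact: f_littleo]. Qed.

End S.
Section Tri.
Variables (K : comRingType) (j : nat) (M : 'M[K]_j).
Hypothesis HM : forall k l : 'I_j, (k <= l)%N -> M k l = (k == l)%:R.

Lemma tri_sum (x : 'I_j -> K) (i : 'I_j) :
  (forall l : 'I_j, (l < i)%N -> x l = 0) -> \sum_l M i l * x l = x i.
Proof.
move=> Hx; rewrite (bigD1 i) //= HM // eqxx mul1r big1 ?addr0 // => l nli.
case: (ltnP l i) => [/Hx -> | il]; first by rewrite mulr0.
by rewrite HM // eq_sym (negbTE nli) mul0r.
Qed.

Lemma tri_zero (x : 'I_j -> K) (m : nat) :
  (forall l : 'I_j, (m < l)%N -> x l = 0) ->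
  (forall k : 'I_j, (k <= m)%N -> \sum_l M k l * x l = 0) ->
  forall i, x i = 0.
Proof.
move=> Hx Hs.
suff P t : forall i : 'I_j, (i < t)%N -> x i = 0 by move=> i; apply: (P i.+1).
elim: t => [//|t IH] i.
rewrite ltnS leq_eqVlt => /orP [/eqP it | /IH //].
case: (ltnP m i) => [/Hx //| im].
rewrite -(@tri_sum x i); first exact: Hs.
by move=> l; rewrite it => /IH.
Qed.
End Tri.

Section Ker.
Variables (K : idomainType) (n j : nat) (A : 'M[K]_n) (CH : 'M[K]_(j, n)) (Q : 'M[K]_(n, j)) (H : 'M[K]_j).
Hypothesis HF2 : forall k l : 'I_j, (k <= l)%N -> (CH *m Q) k l = (k == l)%:R.
Hypothesis HF4 : forall k l : 'I_j, (l.+1 < k)%N -> H k l = 0.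
Hypothesis Hsub : forall k l : 'I_j, k = l.+1 :> nat -> H k l != 0.

Lemma kernel0 (h1 : 'M[K]_(n, j)) (h2 : 'M[K]_j) :
  A *m h1 = h1 *m H + Q *m h2 ->
  (forall k l : 'I_j, (k <= l)%N -> (CH *m h1) k l = 0) ->
  (forall r (i : 'I_j), i = 0%N :> nat -> h1 r i = 0) ->
  (forall k l : 'I_j, (l.+1 < k)%N -> h2 k l = 0) ->
  h1 = 0 /\ h2 = 0.
Proof.
move=> E1 E2 E3 E4.
have P : forall l, (l < j)%N -> forall i : 'I_j, (i <= l)%N -> forall r, h1 r i = 0.
  elim=> [|l IH] hl i il r.
    by apply: E3; move: il; rewrite leqn0 => /eqP.
  move: il; rewrite leq_eqVlt => /orP [/eqP ieq | ilt]; last first.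
    by apply: (IH (ltnW hl)).
  have hl' : (l < j)%N by apply: ltnW.
  pose lo : 'I_j := Ordinal hl'.
  have Hcol : forall r (i' : 'I_j), (i' <= l)%N -> h1 r i' = 0.
    by move=> r' i' il'; apply: (IH hl').
  have Hx : forall i', h2 i' lo = 0.
    apply: (@tri_zero _ _ (CH *m Q) HF2 (fun i' => h2 i' lo) l.+1).
      by move=> l' hl''; apply: E4.
    move=> k kl.
    have -> : \sum_l0 (CH *m Q) k l0 * h2 l0 lo = (CH *m (Q *m h2)) k lo.
      by rewrite mulmxA mxE.
    have -> : Q *m h2 = A *m h1 - h1 *m H by rewrite E1 addrAC subrr add0r.
    rewrite mulmxBr !mulmxA !mxE.
    rewrite big1; last by move=> r' _; rewrite Hcol ?mulr0.
    rewrite big1 ?subrr // => i' _.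
    case: (ltnP l i') => [li' | il']; last by rewrite mxE big1 ?mul0r // => r' _; rewrite Hcol ?mulr0.
    move: li'; rewrite leq_eqVlt => /orP [/eqP ei' | li'].
      by rewrite E2 ?mul0r // -ei'.
    by rewrite HF4 ?mulr0.
  have := congr1 (fun X : 'M[K]_(n,j) => X r lo) E1; rewrite /= !mxE.
  rewrite big1; last by move=> k _; rewrite Hcol ?mulr0.
  rewrite [X in _ = _ + X]big1; last by move=> k _; rewrite Hx mulr0.
  rewrite addr0 (bigD1 i) //= big1 ?addr0; last first.
    move=> i' ni'; case: (ltnP l i') => [li' | il']; last by rewrite Hcol ?mul0r.
    move: li'; rewrite leq_eqVlt => /orP [/eqP ei' | li'].
      by move: ni'; rewrite -(inj_eq val_inj) /= -ei' ieq eqxx.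
    by rewrite HF4 ?mulr0.
  move=> /esym /eqP; rewrite mulf_eq0 => /orP [/eqP //|].
  by rewrite (negbTE (Hsub i lo ieq)).
have h10 : h1 = 0.
  by apply/matrixP => r i; rewrite mxE; apply: (P i (ltn_ord i) i (leqnn i)).
split=> //.
move: E1; rewrite h10 mul0mx mulmx0 add0r => /esym Qh2.
apply/matrixP => i l; rewrite mxE.
apply: (@tri_zero _ _ (CH *m Q) HF2 (fun i' => h2 i' l) j).
  by move=> l' jl; have := ltn_trans jl (ltn_ord l'); rewrite ltnn.
move=> k _; have := congr1 (fun X : 'M[K]_j => X k l) (congr1 (mulmx CH) Qh2).
by rewrite /= mulmxA mulmx0 !mxE.
Qed.
End Ker.

Theorem proposition2 (R : realType) (n j : nat) (A : 'M[Cx R]_n)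
  (v : 'cV[Cx R]_n) (C : 'M[Cx R]_(n, j))
  (Q : 'M[Cx R]_(n, j)) (H : 'M[Cx R]_j) :
  (1 <= j)%N -> (j <= n)%N ->
  arnoldi_f A v C (Q, H) = 0 ->
  (forall k l : 'I_j, k = l.+1 :> nat -> H k l != 0) ->
  differentiable (arnoldi_f A v C) (nbhs (Q, H)) /\
  injective ('d (arnoldi_f A v C) (nbhs (Q, H))).
Proof.
move=> j1 jn Hf0 Hsub.
split; first exact: diff_f.
have dE := @diffE_f R n j A v C Q H.
have -> : ('d (arnoldi_f A v C) (nbhs (Q, H)) : _ -> _) = DL _ _ _ A C Q H by exact: dE.
case: Hf0 => F1 F2 F3 F4.
have HF2 : forall k l : 'I_j, (k <= l)%N -> (ctrmx C *m Q) k l = (k == l)%:R.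
  move=> k l kl; move/matrixP: F2 => /(_ k l); rewrite [LHS]mxE [RHS]mxE kl.
  by move/eqP; rewrite subr_eq0 => /eqP.
have HF4 : forall k l : 'I_j, (l.+1 < k)%N -> H k l = 0.
  by move=> k l kl; move/matrixP: F4 => /(_ k l); rewrite [LHS]mxE [RHS]mxE kl.
move=> u1 u2 e.
have : DL _ _ _ A C Q H (u1 - u2) = 0 by rewrite linearB; apply/eqP; rewrite subr_eq0; apply/eqP.
move Hd : (u1 - u2) => d; case: d Hd => h1 h2 eh.
rewrite /DL /= /Dfun /=.
case=> E1 E2 E3 E4.
have [h10 h20] : h1 = 0 /\ h2 = 0.
  apply: (@kernel0 _ n j A _ Q H HF2 HF4 Hsub).
  - by move/eqP: E1; rewrite subr_eq0 => /eqP.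
  - by move=> k l kl; move/matrixP: E2 => /(_ k l); rewrite [LHS]mxE [RHS]mxE kl.
  - move=> r i i0; move/matrixP: E3 => /(_ r ord0); rewrite [LHS]mxE [RHS]mxE.
    rewrite (big_pred1 i) // => l; rewrite /= -(inj_eq val_inj) /= i0.
    by [].
  - by move=> k l kl; move/matrixP: E4 => /(_ k l); rewrite [LHS]mxE [RHS]mxE kl.
by apply/eqP; rewrite -subr_eq0 eh h10 h20.
Qed.
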